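(* Let $M\ge1$, $m_0\in\{1,\dots,M\}$, Hilbert spaces $X_{\kappa_m}$ ($|m|\le M$), $\mathbb X_M=\prod_{|m|\le M}X_{\kappa_m}$, $\mathbb X_M^*=\prod_{|m|\le M}X_{\kappa_m}^*$, a block-diagonal $\mathbb D_M$ with boundedly invertible blocks $\mathcal L_\omega(\kappa_m):X_{\kappa_m}\to X_{\kappa_m}^*$, and a coupling $(\mathbb C_M\mathbf V)_m=\mathcal K_m^-\mathbf v_{m-m_0}+\mathcal K_m^+\mathbf v_{m+m_0}$ with bounded $\mathcal K_m^\pm:X_{\kappa_{m\mp m_0}}\to X_{\kappa_m}^*$ (and $\mathcal K_m^\pm:=0$ if $m\mp m_0\notin\{-M,\dots,M\}$). Let $\mathbb T_M:=\mathbb D_M^{-1}\mathbb C_M$, let $\varepsilon>0$ with $\varepsilon\|\mathbb T_M\|<1$, and let $\mathbf F^{[M]}\in\mathbb X_M^*$ be supported only at $m=0$, with $m=0$ component $\hat{\mathbf f}_0$. Let $\mathbf V^{[M]}=(\mathbf v^{[M]}_m)$ be the unique solution of $(\mathbb D_M+\varepsilon\mathbb C_M)\mathbf V^{[M]}=\mathbf F^{[M]}$ and $\mathbf W:=\mathbb D_M^{-1}\mathbf F^{[M]}$. Then, with remainders of norm $O(\varepsilon^2)$ as $\varepsilon\to0^+$ (all other data fixed): (1) $\mathbf v^{[M]}_0=\mathcal L_\omega(\kappa_0)^{-1}\hat{\mathbf f}_0+O(\varepsilon^2)$ in $X_{\kappa_0}$; (2) $\mathbf v^{[M]}_{\pm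 m_0}=-\varepsilon(\mathbb T_M\mathbf W)_{\pm m_0}+O(\varepsilon^2)=-\varepsilon\,\mathcal L_\omega(\kappa_{\pm m_0})^{-1}(\mathbb C_M\mathbf W)_{\pm m_0}+O(\varepsilon^2)$ in $X_{\kappa_{\pm m_0}}$; (3) in the symmetric case $\mathcal K_m^-=\tfrac i2\mathcal K_\omega(\kappa_{m-m_0}\to\kappa_m)$, $\mathcal K_m^+=\tfrac i2\mathcal K_\omega(\kappa_{m+m_0}\to\kappa_m)$ for given bounded operators $\mathcal K_\omega(\kappa_{m'}\to\kappa_m):X_{\kappa_{m'}}\to X_{\kappa_m}^*$, \[ \mathbf v^{[M]}_{\pm m_0}=-\frac{i\varepsilon}2\,\mathcal L_\omega(\kappa_{\pm m_0})^{-1}\mathcal K_\omega(\kappa_0\to\kappa_{\pm m_0})\,\mathbf v^{[M]}_0+O(\varepsilon^2). \]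
   Context: $\mathbb D_M^{-1}$ is the block-diagonal operator with blocks $\mathcal L_\omega(\kappa_m)^{-1}$; ''supported only at $m=0$'' means all components with $m\neq0$ vanish. Components of elements of $\mathbb X_M$ or $\mathbb X_M^*$ are indexed by $m\in\{-M,\dots,M\}$. *)

(* Defs.v *)
From HB Require Import structures.
From mathcomp Require Import all_boot all_order all_algebra.
From mathcomp Require Import all_classical all_reals all_analysis.
From mathcomp Require Import complex.
Set Implicit Arguments. Unset Strict Implicit. Unset Printing Implicit Defensive.
Import Order.TTheory GRing.Theory Num.Theory.
Import numFieldNormedType.Exports.
Local Open Scope ring_scope.

Definition in_range (M : nat) (m : int) : bool := `|m| <= M%:Z.

Definition bounded_linear (K : numDomainType) (U V : normedModType K)
    (f : U -> V) : Prop :=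
  (forall (a : K) (x y : U), f (a *: x + y) = a *: f x + f y) /\
  exists c : K, 0 <= c /\ forall x : U, `|f x| <= c * `|x|.

(* Hilbert-product norm on X_M = prod_{|m|<=M} X_m:
   sqrt (sum_{m=-M}^{M} ||V_m||^2), index m = i - M for i < 2M+1 *)
Definition prod_norm (R : rcfType) (M : nat) (X : int -> normedModType R[i])
    (V : forall m : int, X m) : R[i] :=
  sqrtC (\sum_(i < (2 * M).+1) `|V (i%:Z - M%:Z)| ^+ 2).

Definition coupling (R : rcfType) (M : nat) (m0 : int)
    (X Y : int -> normedModType R[i])
    (Km : forall m : int, X (m - m0) -> Y m)
    (Kp : forall m : int, X (m + m0) -> Y m)
    (V : forall m : int, X m) : forall m : int, Y m :=
  fun m => (if in_range M (m - m0) then Km m (V (m - m0)) else 0)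
         + (if in_range M (m + m0) then Kp m (V (m + m0)) else 0).

(* T_M := D_M^{-1} C_M, with Dinv m the inverse of the block L_omega(kappa_m) *)
Definition transfer (R : rcfType) (M : nat) (m0 : int)
    (X Y : int -> normedModType R[i])
    (Dinv : forall m : int, Y m -> X m)
    (Km : forall m : int, X (m - m0) -> Y m)
    (Kp : forall m : int, X (m + m0) -> Y m)
    (V : forall m : int, X m) : forall m : int, X m :=
  fun m => Dinv m (coupling M Km Kp V m).

(* "eps * ||T_M|| < 1" for the operator norm of T_M on the Hilbert product
   X_M; since the operator norm is the least (attained) bound c with
   ||T V|| <= c ||V||, this is: some bound c >= 0 of T_M has eps * c < 1. *)
Definition eps_opnorm_lt1 (R : rcfType) (M : nat) (X : int -> normedModType R[i])
    (T : (forall m : int, X m) -> (forall m : int, X m)) (eps : R[i]) : Prop :=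
  exists c : R[i], 0 <= c /\ eps * c < 1 /\
    forall V : forall m : int, X m, prod_norm M (T V) <= c * prod_norm M V.

(* Main.v *)
Require Import Defs.
From HB Require Import structures.
From mathcomp Require Import all_boot all_order all_algebra.
From mathcomp Require Import all_classical all_reals all_analysis.
From mathcomp Require Import complex.
From mathcomp Require Import zify ring lra.
Import Order.TTheory GRing.Theory Num.Theory.
Import numFieldNormedType.Exports.
Local Open Scope ring_scope.
Lemma bridge (M : nat) (m : int) : in_range M m -> exists n, (n < (2*M).+1)%N /\ m = n%:Z - M%:Z.
Proof.
rewrite /in_range ler_norml => /andP[h1 h2].
exists (absz (m + M%:Z)).
have h3 : 0 <= m + M%:Z by lia.
rewrite gez0_abs //. lia.
Qed.

Lemma bridge2 (M : nat) (n : nat) : (n < (2*M).+1)%N -> in_range M (n%:Z - M%:Z).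
Proof. move=> h; rewrite /in_range ler_norml; apply/andP; split; lia. Qed.

Section BL.
Variables (K : numDomainType) (U V : normedModType K) (f : U -> V).
Hypothesis hf : bounded_linear f.
Lemma blD x y : f (x + y) = f x + f y.
Proof. by have := hf.1 1 x y; rewrite scale1r scale1r. Qed.
Lemma bl0 : f 0 = 0.
Proof.
have h := blD 0 0; rewrite addr0 in h.
by apply: (addrI (f 0)); rewrite addr0 -h.
Qed.
Lemma blZ a x : f (a *: x) = a *: f x.
Proof. by have := hf.1 a x 0; rewrite !addr0 bl0 addr0. Qed.
Lemma blN x : f (- x) = - f x.
Proof. by rewrite -scaleN1r blZ scaleN1r. Qed.
Lemma blB x y : f (x - y) = f x - f y.
Proof. by rewrite blD blN. Qed.
End BL.
Arguments blD {K U V f} hf x y.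
Arguments bl0 {K U V f} hf.
Arguments blZ {K U V f} hf a x.
Arguments blN {K U V f} hf x.
Arguments blB {K U V f} hf x y.

Lemma unif (K : numDomainType) (M : nat) (P : int -> K -> Prop) :
 (forall m c c', c <= c' -> P m c -> P m c') ->
 (forall m, in_range M m -> exists c, 0 <= c /\ P m c) ->
 exists B, 0 <= B /\ forall m, in_range M m -> P m B.
Proof.
move=> mono hex.
suff: forall s : seq int, exists B, 0 <= B /\ forall m, m \in s -> in_range M m -> P m B.
  case/(_ [seq (n%:Z - M%:Z) | n <- iota 0 (2*M).+1]) => B [B0 HB].
  exists B; split => // m hm; apply: HB => //.
  have [n [hn ->]] := bridge _ _ hm.
  by apply/mapP; exists n => //; rewrite mem_iota.
elim => [|a s [B [B0 HB]]]; first by exists 0.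
case ha: (in_range M a).
  have [c [c0 hc]] := hex a ha.
  exists (B + c); split; first exact: addr_ge0.
  move=> m; rewrite inE => /orP[/eqP -> _|ms hm].
    by apply: mono hc; rewrite lerDr.
  by apply: mono (HB m ms hm); rewrite lerDl.
exists B; split => // m; rewrite inE => /orP[/eqP -> |ms hm]; first by rewrite ha.
exact: HB.
Qed.

Definition Gn (R : realType) (M : nat) (X : int -> completeNormedModType R[i])
  (U : forall m, X m) : R[i] := \sum_(n < (2*M).+1) `|U (n%:Z - M%:Z)|.
Arguments Gn {R} M {X} U.

Lemma Gn_ge0 (R : realType) (M : nat) (X : int -> completeNormedModType R[i])
  (U : forall m, X m) : 0 <= Gn M U.
Proof. by apply: sumr_ge0 => n _. Qed.

Lemma Gn_le (R : realType) (M : nat) (X : int -> completeNormedModType R[i])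
  (U : forall m, X m) m : in_range M m -> `|U m| <= Gn M U.
Proof.
move=> hm; have [n [hn ->]] := bridge _ _ hm.
rewrite /Gn (bigD1 (Ordinal hn)) //= lerDl.
by apply: sumr_ge0 => k _.
Qed.
Theorem mainTheorem18 (R : realType) (M : nat) (m0 : int)
  (X Y : int -> completeNormedModType R[i])
  (D : forall m : int, X m -> Y m) (Dinv : forall m : int, Y m -> X m)
  (Km : forall m : int, X (m - m0) -> Y m)
  (Kp : forall m : int, X (m + m0) -> Y m)
  (F : forall m : int, Y m)
  (V : R[i] -> forall m : int, X m) :
  (1 <= M)%N ->
  (1 <= m0) -> (m0 <= M%:Z) ->
  (forall m, in_range M m -> bounded_linear (D m)) ->
  (forall m, in_range M m -> bounded_linear (Dinv m)) ->
  (forall m, in_range M m -> cancel (D m) (Dinv m)) ->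
  (forall m, in_range M m -> cancel (Dinv m) (D m)) ->
  (forall m, in_range M m -> in_range M (m - m0) -> bounded_linear (Km m)) ->
  (forall m, in_range M m -> in_range M (m + m0) -> bounded_linear (Kp m)) ->
  (* F supported only at m = 0 (its m = 0 component is F 0 = \hat f_0) *)
  (forall m, in_range M m -> m != 0 -> F m = 0) ->
  (* V eps is the solution of (D_M + eps C_M) V = F whenever 0 < eps, eps ||T_M|| < 1 *)
  (forall eps : R[i], 0 < eps -> eps_opnorm_lt1 M (transfer M Dinv Km Kp) eps ->
     forall m, in_range M m ->
       D m (V eps m) + eps *: coupling M Km Kp (V eps) m = F m) ->
  let W : forall m : int, X m := fun m => Dinv m (F m) in
  let small (eps : R[i]) := 0 < eps /\ eps_opnorm_lt1 M (transfer M Dinv Km Kp) eps in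
  (* (1) *)
  (exists C delta : R[i], 0 < delta /\ forall eps, small eps -> eps < delta ->
     `|V eps 0 - Dinv 0 (F 0)| <= C * eps ^+ 2) /\
  (* (2) *)
  (forall s : int, (s = m0 \/ s = - m0) ->
     exists C delta : R[i], 0 < delta /\ forall eps, small eps -> eps < delta ->
       `|V eps s - (- (eps *: transfer M Dinv Km Kp W s))| <= C * eps ^+ 2 /\
       `|V eps s - (- (eps *: Dinv s (coupling M Km Kp W s)))| <= C * eps ^+ 2) /\
  (* (3) symmetric case *)
  (forall Kw : forall m' m : int, X m' -> Y m,
     (forall m' m, in_range M m' -> in_range M m -> bounded_linear (Kw m' m)) ->
     (forall m x, Km m x = ('i / 2) *: Kw (m - m0) m x) ->
     (forall m x, Kp m x = ('i / 2) *: Kw (m + m0) m x) ->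
     forall s : int, (s = m0 \/ s = - m0) ->
     exists C delta : R[i], 0 < delta /\ forall eps, small eps -> eps < delta ->
       `|V eps s - (- ('i * eps / 2) *: Dinv s (Kw 0 s (V eps 0)))|
         <= C * eps ^+ 2).
Proof.
move=> hM hm0a hm0b HD HDi HDK HDiK HKm HKp HF HV W small.
have in0 : in_range M 0 by rewrite /in_range normr0.
have inp : in_range M m0 by rewrite /in_range ler_norml; apply/andP; split; lia.
have inn : in_range M (- m0) by rewrite /in_range ler_norml; apply/andP; split; lia.
have [B [B0 HB]] : exists B : R[i], 0 <= B /\ forall m, in_range M m ->
   (forall y, `|Dinv m y| <= B * `|y|) /\
   (in_range M (m - m0) -> forall x, `|Km m x| <= B * `|x|) /\
   (in_range M (m + m0) -> forall x, `|Kp m x| <= B * `|x|).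
  apply: unif.
    move=> m c c' hc [h1 [h2 h3]]; split; [|split].
    - by move=> y; apply: le_trans (h1 y) _; apply: ler_wpM2r.
    - by move=> h x; apply: le_trans (h2 h x) _; apply: ler_wpM2r.
    - by move=> h x; apply: le_trans (h3 h x) _; apply: ler_wpM2r.
  move=> m hm.
  have [c1 [c10 h1]] := (HDi m hm).2.
  have [c2 [c20 h2]] : exists c : R[i], 0 <= c /\
      (in_range M (m - m0) -> forall x, `|Km m x| <= c * `|x|).
    case h: (in_range M (m - m0)); last by exists 0; split.
    by have [c [c0 hc]] := (HKm m hm h).2; exists c.
  have [c3 [c30 h3]] : exists c : R[i], 0 <= c /\
      (in_range M (m + m0) -> forall x, `|Kp m x| <= c * `|x|).
    case h: (in_range M (m + m0)); last by exists 0; split.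
    by have [c [c0 hc]] := (HKp m hm h).2; exists c.
  exists (c1 + c2 + c3); split; first by rewrite !addr_ge0.
  split; [|split].
  - move=> y; apply: le_trans (h1 y) _; apply: ler_wpM2r => //.
    by rewrite -addrA lerDl addr_ge0.
  - move=> h x; apply: le_trans (h2 h x) _; apply: ler_wpM2r => //.
    by rewrite addrAC lerDr addr_ge0.
  - move=> h x; apply: le_trans (h3 h x) _; apply: ler_wpM2r => //.
    by rewrite lerDr addr_ge0.
set T := transfer M Dinv Km Kp.
pose N := fun (U : forall m, X m) (k : int) => if in_range M k then `|U k| else 0.
have Nle : forall U k b, 0 <= b -> (in_range M k -> `|U k| <= b) -> N U k <= b.
  by move=> U k b b0 h; rewrite /N; case: ifP => // /h.
have Tloc : forall U m, in_range M m ->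
    `|T U m| <= B * (B * (N U (m - m0) + N U (m + m0))).
  move=> U m hm; rewrite /T /transfer.
  apply: le_trans ((HB m hm).1 _) _; apply: ler_wpM2l => //.
  rewrite /coupling; apply: le_trans (ler_normD _ _) _.
  rewrite mulrDr; apply: lerD; rewrite /N; case: ifP => h.
  - exact: (HB m hm).2.1 h _.
  - by rewrite normr0 mulr0.
  - exact: (HB m hm).2.2 h _.
  - by rewrite normr0 mulr0.
have Tglob : forall U m, in_range M m -> `|T U m| <= (B * B * 2) * Gn M U.
  move=> U m hm; apply: le_trans (Tloc U m hm) _.
  have h : forall k, N U k <= Gn M U.
    by move=> k; apply: Nle; [exact: Gn_ge0 | exact: Gn_le].
  have := lerD (h (m - m0)) (h (m + m0)) => h2.
  rewrite -!mulrA; apply: ler_wpM2l => //; apply: ler_wpM2l => //.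
  by apply: le_trans h2 _; rewrite mulr2n mulrDl mul1r.
have Tlin : forall U U' m, in_range M m ->
    T U m - T U' m = T (fun k => U k - U' k) m.
  move=> U U' m hm; rewrite /T /transfer -(blB (HDi m hm)); congr (Dinv m _).
  rewrite /coupling opprD addrACA.
  case h1: (in_range M (m - m0)); case h2: (in_range M (m + m0));
    rewrite ?(blB (HKm m hm h1)) ?(blB (HKp m hm h2)) ?subrr //.
have Fix : forall eps, small eps -> forall m, in_range M m ->
    V eps m = W m - eps *: T (V eps) m.
  move=> eps hs m hm.
  have := congr1 (Dinv m) (HV eps hs.1 hs.2 m hm).
  rewrite (blD (HDi m hm)) (blZ (HDi m hm)) HDK // => h.
  by rewrite /W -h /T /transfer addrK.
have Wnz : forall m, in_range M m -> m != 0 -> W m = 0.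
  by move=> m hm hm0; rewrite /W HF // (bl0 (HDi m hm)).
set c1 := B * B * 2.
have c10 : 0 <= c1 by rewrite /c1 !mulr_ge0.
set c0 := ((2*M).+1)%:R * c1.
have c00 : 0 <= c0 by rewrite /c0 mulr_ge0.
have GT : forall U, Gn M (T U) <= c0 * Gn M U.
  move=> U; rewrite /Gn.
  apply: le_trans (ler_sum _ (fun n _ => Tglob U _ (bridge2 _ _ (ltn_ord n)))) _.
  rewrite sumr_const (_ : #|_| = (2*M).+1); last exact: card_ord.
  by rewrite -/c1 -mulrnAl -mulr_natl /c0; exact: lexx.
set delta := (2 * c0 + 1)^-1.
have dpos : 0 < delta by rewrite /delta invr_gt0 ltr_wpDl // mulr_ge0.
have epsc : forall eps, 0 <= eps -> eps < delta -> eps * c0 * 2 <= 1.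
  move=> eps e0 ed.
  have h1 : eps * (2 * c0 + 1) < 1.
    by rewrite -ltr_pdivlMr ?div1r // ltr_wpDl // mulr_ge0.
  apply: le_trans (ltW h1).
  rewrite [X in _ <= X](_ : _ = eps * c0 * 2 + eps); last by ring.
  by rewrite lerDl.
have apriori : forall eps, small eps -> eps < delta -> Gn M (V eps) <= Gn M W * 2.
  move=> eps hs ed.
  have e0 : 0 <= eps by apply: ltW; exact: hs.1.
  have h1 : Gn M (V eps) <= Gn M W + eps * (c0 * Gn M (V eps)).
    apply: le_trans (_ : Gn M W + eps * Gn M (T (V eps)) <= _); last first.
      by rewrite lerD2l; apply: ler_wpM2l.
    rewrite /Gn mulr_sumr -big_split; apply: ler_sum => n _.
    rewrite [X in `|X|]Fix //; last exact: bridge2.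
    by apply: le_trans (ler_normB _ _) _; rewrite normrZ ger0_norm.
  have h2 : Gn M (V eps) * 2 <= Gn M W * 2 + (eps * c0 * 2) * Gn M (V eps).
    rewrite (_ : (eps * c0 * 2) * Gn M (V eps) = (eps * (c0 * Gn M (V eps))) * 2); last by ring.
    by rewrite -mulrDl; apply: ler_wpM2r.
  have h3 : (eps * c0 * 2) * Gn M (V eps) <= Gn M (V eps).
    by rewrite -[X in _ <= X]mul1r; apply: ler_wpM2r; [exact: Gn_ge0 | exact: epsc].
  have h4 := le_trans h2 (lerD (lexx _) h3).
  rewrite -lerBlDr in h4.
  by rewrite (_ : Gn M (V eps) = Gn M (V eps) * 2 - Gn M (V eps)) //; ring.
set K1 := c1 * (Gn M W * 2).
have K10 : 0 <= K1 by rewrite /K1 mulr_ge0 // mulr_ge0 // Gn_ge0.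
have diff : forall eps, small eps -> eps < delta -> forall k, in_range M k ->
    `|V eps k - W k| <= eps * K1.
  move=> eps hs ed k hk.
  have e0 : 0 <= eps by apply: ltW; exact: hs.1.
  rewrite Fix // addrAC subrr add0r normrN normrZ ger0_norm //.
  apply: ler_wpM2l => //; apply: le_trans (Tglob _ _ hk) _.
  by apply: ler_wpM2l => //; apply: apriori.
have smallk : forall eps, small eps -> eps < delta -> forall k, k != 0 ->
    N (V eps) k <= eps * K1.
  move=> eps hs ed k k0; apply: Nle; first by rewrite mulr_ge0 // ltW //; exact: hs.1.
  by move=> hk; have := diff eps hs ed k hk; rewrite Wnz // subr0.
have smalld : forall eps, small eps -> eps < delta -> forall k,
    N (fun j => V eps j - W j) k <= eps * K1.
  move=> eps hs ed k; apply: Nle; first by rewrite mulr_ge0 // ltW //; exact: hs.1.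
  exact: diff.
set C := B * (B * (K1 + K1)).
have P2 : forall s, (s = m0 \/ s = - m0) -> forall eps, small eps -> eps < delta ->
    `|V eps s - - (eps *: T W s)| <= C * eps ^+ 2.
  move=> s hs eps hsm ed.
  have ins : in_range M s by case: hs => ->.
  have s0 : s != 0 by case: hs => ->; lia.
  have e0 : 0 <= eps by apply: ltW; exact: hsm.1.
  rewrite Fix // Wnz // sub0r opprK.
  rewrite (_ : - (eps *: T (V eps) s) + eps *: T W s = - (eps *: (T (V eps) s - T W s)));
    last by rewrite scalerBr opprB addrC.
  rewrite Tlin // normrN normrZ ger0_norm //.
  apply: le_trans (ler_wpM2l e0 (Tloc _ _ ins)) _.
  apply: le_trans (_ : eps * (B * (B * (eps * K1 + eps * K1))) <= _).
    do 3! apply: ler_wpM2l => //.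
    by apply: lerD; apply: smalld.
  by rewrite le_eqVlt; apply/orP; left; apply/eqP; rewrite /C; ring.
split.
  exists C, delta; split => // eps hs ed.
  have e0 : 0 <= eps by apply: ltW; exact: hs.1.
  rewrite Fix // /W /= addrAC subrr add0r normrN normrZ ger0_norm //.
  apply: le_trans (ler_wpM2l e0 (Tloc _ _ in0)) _.
  apply: le_trans (_ : eps * (B * (B * (eps * K1 + eps * K1))) <= _).
    do 3! apply: ler_wpM2l => //.
    by apply: lerD; apply: smallk => //; lia.
  by rewrite le_eqVlt; apply/orP; left; apply/eqP; rewrite /C; ring.
split.
  move=> s hs; exists C, delta; split => // eps hsm ed.
  by split; exact: P2.
move=> Kw HKw Hkm Hkp s hs.
have ins : in_range M s by case: hs => ->.
have [cw [cw0 hcw]] := (HKw 0 s in0 ins).2.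
set ci : R[i] := 'i / 2.
have TWs : T W s = ci *: Dinv s (Kw 0 s (W 0)).
  rewrite /T /transfer -(blZ (HDi s ins)); congr (Dinv s _).
  rewrite /coupling; case: hs ins => hs ins; subst s.
  - have e1 : in_range M (m0 - m0) = true by rewrite subrr.
    rewrite e1 Hkm.
    have e2 : forall k (e : k = 0), Kw k m0 (W k) = Kw 0 m0 (W 0) by move=> k ->.
    rewrite (e2 _ (subrr m0)).
    case e3: (in_range M (m0 + m0)); last by rewrite addr0.
    rewrite (Wnz (m0 + m0)) //; last by lia.
    by rewrite (bl0 (HKp m0 inp e3)) addr0.
  - have e1 : in_range M (- m0 + m0) = true by rewrite addNr.
    rewrite e1 Hkp.
    have e2 : forall k (e : k = 0), Kw k (- m0) (W k) = Kw 0 (- m0) (W 0) by move=> k ->.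
    rewrite (e2 _ (addNr m0)).
    case e3: (in_range M (- m0 - m0)); last by rewrite add0r.
    rewrite (Wnz (- m0 - m0)) //; last by lia.
    by rewrite (bl0 (HKm (- m0) inn e3)) add0r.
set C3 := C + `|ci| * B * cw * K1.
exists C3, delta; split => // eps hsm ed.
have e0 : 0 <= eps by apply: ltW; exact: hsm.1.
rewrite (_ : 'i * eps / 2 = eps * ci); last by rewrite /ci; ring.
rewrite scaleNr opprK.
have -> : V eps s + (eps * ci) *: Dinv s (Kw 0 s (V eps 0)) =
    (V eps s - - (eps *: T W s)) + (eps * ci) *: Dinv s (Kw 0 s (V eps 0 - W 0)).
  rewrite opprK TWs scalerA (blB (HKw 0 s in0 ins)) (blB (HDi s ins)) scalerBr.
  by rewrite addrA addrAC addrK.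
apply: le_trans (ler_normD _ _) _.
rewrite normrZ normrM (ger0_norm e0).
apply: le_trans (lerD (P2 s hs eps hsm ed)
   (_ : _ <= eps * `|ci| * (B * (cw * (eps * K1))))) _.
  apply: ler_wpM2l; first by rewrite mulr_ge0.
  apply: le_trans ((HB s ins).1 _) _; apply: ler_wpM2l => //.
  apply: le_trans (hcw _) _; apply: ler_wpM2l => //.
  exact: diff.
rewrite /C3 mulrDl lerD2l.
have key : forall a b : R[i],
    eps * a * (B * (cw * (eps * b))) <= a * B * cw * b * eps ^+ 2.
  by move=> a b; rewrite le_eqVlt; apply/orP; left; apply/eqP; ring.
exact: key.
Qed.
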